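(* Let $d$ be a square-free positive integer, let $E=\mathbb{Q}(\sqrt{-d})$ with ring of integers $\mathcal{O}$, let $p$ be a prime number that splits in $E$, and let $\mathfrak{P}_1,\mathfrak{P}_2$ be the prime ideals of $\mathcal{O}$ lying above $p$. For a positive integer $r$ and $j\in\{1,2\}$, let $L_j^r=\mathfrak{P}_jv_j$ be the unary Hermitian lattice in a one-dimensional Hermitian space $Ev_j$ with $h(v_j)=r/p$. Then for every positive integer $r$ and every positive integer $m$, $L_1^r$ is represented by $I_m$ if and only if $L_2^r$ is represented by $I_m$. In particular, the set of positive integers $r$ with $L_1^r\in\mathfrak{S}_d(1)$ equals the set of positive integers $r$ with $L_2^r\in\mathfrak{S}_d(1)$.
   Context: A Hermitian space is a finite-dimensional $E$-vector space $V$ with a map $h:V\times V\to E$ that is $E$-linear in the first argument and satisfies $h(v,w)=\overline{h(w,v)}$; write $h(v)=h(v,v)$. A Hermitian lattice is a finitely generated $\mathcal{O}$-submodule of such a space; unary means the space is one-dimensional. It is positive definite integral if $h(v)\in\mathbb{Z}_{>0}$ for nonzero $v$ and $h(v,w)\in\mathcal{O}$ for all $v,w$ in it (the lattices $L_j^r$ above are positive definite integral). $I_m$ is $\mathcal{O}^m$ with $h(x,y)=\sum_{i=1}^m x_i\overline{y_i}$. A lattice $L$ is represented by $K$ if there is an injective $\mathcal{O}$-linear map $L\to K$ preserving $h$. $\mathfrak{S}_d(1)$ is the set of positive definite integral unary Hermitian lattices over $\mathcal{O}$ represented by $I_m$ for some $m\geq1$. *)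

(* Defs.v *)
(* E = Q(sqrt(-d)) realised inside algC. *)
From mathcomp Require Import all_boot all_order all_algebra all_field.
Set Implicit Arguments. Unset Strict Implicit. Unset Printing Implicit Defensive.
Import Order.TTheory GRing.Theory Num.Theory.
Local Open Scope ring_scope.

Definition squarefree (d : nat) : Prop :=
  forall q : nat, prime q -> ~ (q * q %| d)%N.

Definition inE (d : nat) (x : algC) : Prop :=
  exists a b : rat, x = ratr a + ratr b * sqrtC (- (d%:R)).

Definition inO (d : nat) (x : algC) : Prop := inE d x /\ x \in Aint.

Definition ideal_of_O (d : nat) (I : algC -> Prop) : Prop :=
  [/\ forall x, I x -> inO d x,
      I 0,
      forall x y, I x -> I y -> I (x + y)
    & forall a x, inO d a -> I x -> I (a * x)].

Definition prime_ideal_of_O (d : nat) (I : algC -> Prop) : Prop :=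
  [/\ ideal_of_O d I, ~ I 1 &
      forall a b, inO d a -> inO d b -> I (a * b) -> I a \/ I b].

Definition lies_above (d p : nat) (I : algC -> Prop) : Prop :=
  prime_ideal_of_O d I /\ I p%:R.

Definition same_set (I J : algC -> Prop) : Prop := forall x, I x <-> J x.

Definition splits (d p : nat) : Prop :=
  exists I J, [/\ lies_above d p I, lies_above d p J & ~ same_set I J].

(* The unary lattice L = P v with h(v) = r/p is identified with P via x |-> x v;
   then h(x v, y v) = x * y^* * (r/p). *)
Definition hL (p r : nat) (x y : algC) : algC := x * y^* * (r%:R / p%:R).

(* I_m = O^m with the standard Hermitian form *)
Definition hI (m : nat) (u w : 'I_m -> algC) : algC := \sum_(i < m) u i * (w i)^*.

Definition represented_by_I (d p r m : nat) (P : algC -> Prop) : Prop :=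
  exists f : algC -> 'I_m -> algC,
    [/\ forall x, P x -> forall i, inO d (f x i),
        forall a x y, inO d a -> P x -> P y ->
           f (a * x + y) = (fun i => a * f x i + f y i),
        forall x y, P x -> P y -> f x = f y -> x = y
      & forall x y, P x -> P y -> hI (f x) (f y) = hL p r x y].

Definition pos_def_integral (d p r : nat) (P : algC -> Prop) : Prop :=
  (forall x, P x -> x != 0 -> hL p r x x \in Num.nat /\ 0 < hL p r x x) /\
  (forall x y, P x -> P y -> inO d (hL p r x y)).

Definition in_S1 (d p r : nat) (P : algC -> Prop) : Prop :=
  pos_def_integral d p r P /\ exists m, (0 < m)%N /\ represented_by_I d p r m P.

(* Main.v *)
Require Import Defs.
From mathcomp Require Import all_boot all_order all_algebra all_field.
From Stdlib Require Import FunctionalExtensionality Classical.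
From mathcomp Require Import ring lra.
Import Order.TTheory GRing.Theory Num.Theory.
Local Open Scope ring_scope.

Lemma cD (x y : algC) : (x + y)^* = x^* + y^*. Proof. exact: rmorphD. Qed.
Lemma cM (x y : algC) : (x * y)^* = x^* * y^*. Proof. exact: rmorphM. Qed.
Lemma cN (x : algC) : (- x)^* = - x^*. Proof. exact: rmorphN. Qed.
Lemma cV (x : algC) : (x^-1)^* = (x^*)^-1. Proof. exact: fmorphV. Qed.
Lemma cK (x : algC) : x^*^* = x. Proof. exact: conjCK. Qed.
Lemma cI (k : int) : (k%:~R : algC)^* = k%:~R. Proof. exact: rmorph_int. Qed.
Lemma cNat (k : nat) : (k%:R : algC)^* = k%:R. Proof. exact: rmorph_nat. Qed.

Lemma ratr_conj (a : rat) : ((ratr a : algC)^* ) = ratr a.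
Proof. by apply: conj_Creal; apply: Creal_Crat; apply: Crat_rat. Qed.

Lemma sqrt_conj (d : nat) : (0 < d)%N ->
  (sqrtC (- (d%:R)) : algC)^* = - sqrtC (- (d%:R)).
Proof.
move=> d0; set s := sqrtC _.
have hs : s ^+ 2 = - d%:R by rewrite sqrtCK.
have hs' : (s^* ) ^+ 2 = - d%:R by rewrite -rmorphXn hs rmorphN rmorph_nat.
have : (s^* - s) * (s^* + s) = 0.
  have -> : (s^* - s) * (s^* + s) = s^* ^+ 2 - s ^+ 2 by ring.
  by rewrite hs hs' subrr.
move/eqP; rewrite mulf_eq0 => /orP [|]; last by rewrite addr_eq0 => /eqP.
rewrite subr_eq0 => /eqP E.
have : s \is Num.real by apply/CrealP.
rewrite realEsqr hs oppr_ge0 lern0 => /eqP d0'.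
by rewrite d0' in d0.
Qed.

Lemma inO_conj {d x} : (0 < d)%N -> inO d x -> inO d x^*.
Proof.
move=> d0 [[a [b ->]] hA]; split.
  exists a, (- b); rewrite cD (cM (ratr b)) !ratr_conj sqrt_conj //.
  by rewrite rmorphN mulNr mulrN.
by rewrite (Aint_aut Num.Def.conjC).
Qed.

Lemma inO_int d (k : int) : inO d (k%:~R).
Proof.
split; last exact: Aint_int.
by exists (k%:~R), 0; rewrite rmorph0 mul0r addr0 rmorph_int.
Qed.

Lemma inO_trace {d : nat} {x : algC} : (0 < d)%N -> inO d x -> x + x^* \in Num.int.
Proof.
move=> d0 hx; have [[a [b E]] hA] := hx.
apply: Cint_rat_Aint; last by apply: rpredD => //; case: (inO_conj d0 hx : inO d x^*).
apply/CratP; exists (a + a).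
rewrite E cD (cM (ratr b)) !ratr_conj sqrt_conj // rmorphD /=; ring.
Qed.

Lemma inO_norm {d : nat} {x : algC} : (0 < d)%N -> inO d x -> x * x^* \in Num.int.
Proof.
move=> d0 hx; have [[a [b E]] hA] := hx.
apply: Cint_rat_Aint; last by apply: rpredM => //; case: (inO_conj d0 hx : inO d x^*).
apply/CratP; exists (a * a + b * b * d%:R).
rewrite E cD (cM (ratr b)) !ratr_conj sqrt_conj // !rmorphD !rmorphM /= rmorph_nat.
have hs : sqrtC (- (d%:R)) ^+ 2 = - d%:R :> algC by rewrite sqrtCK.
set s := sqrtC _ in hs *.
transitivity (ratr a * ratr a - ratr b * ratr b * s ^+ 2 : algC); first ring.
rewrite hs; ring.
Qed.

Section Primes.

Lemma idealN {d : nat} {P : algC -> Prop} {x y : algC} : ideal_of_O d P -> P x -> P y -> P (x - y).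
Proof.
case=> _ _ hD hM hx hy; rewrite -mulN1r; apply: hD => //.
by apply: hM => //; by have := inO_int d (-1); rewrite rmorphN1.
Qed.

Lemma int_in_prime {d p : nat} {P Q : algC -> Prop} {n : algC} : prime p ->
  lies_above d p P -> lies_above d p Q -> n \in Num.int -> P n -> Q n.
Proof.
move=> pp [[hI h1 hpr] hp] [[[_ _ _ hQM] _ _] hq] /intrP [m ->] hn.
have [dv | ndv] := boolP (p%:Z %| m)%Z.
  have [k ->] := dvdzP dv.
  by rewrite intrM; apply: hQM => //; exact: inO_int.
exfalso; apply: h1.
have cop : coprimez m p.
  by rewrite coprimezE coprime_sym prime_coprime.
have [u [v huv]] := Bezoutz m p.
move/eqP: cop huv => -> huv.
have -> : (1 : algC) = u%:~R * m%:~R + v%:~R * p%:R.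
  have -> : (p%:R : algC) = (p%:Z)%:~R by rewrite pmulrn.
  by rewrite -!intrM -rmorphD /= huv.
case: hI => _ _ hD hM.
by apply: hD; apply: hM => //; exact: inO_int.
Qed.
End Primes.

Definition cset (P : algC -> Prop) := fun x : algC => P x^*.

Lemma conj_prime {d p : nat} {P : algC -> Prop} : (0 < d)%N -> lies_above d p P -> lies_above d p (cset P).
Proof.
move=> d0 [[[hO h0 hD hM] h1 hpr] hp]; rewrite /cset.
split; last by rewrite cNat.
split.
- split.
  + by move=> x /hO /(inO_conj d0); rewrite cK.
  + by rewrite conjC0.
  + by move=> x y hx hy; rewrite cD; apply: hD.
  + by move=> a x ha hx; rewrite cM; apply: hM => //; apply: inO_conj.
- by rewrite conjC1.
- move=> a b ha hb; rewrite cM; apply: hpr; exact: inO_conj.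
Qed.

Lemma cover {d p : nat} {P Q : algC -> Prop} : (0 < d)%N -> prime p -> lies_above d p P -> lies_above d p Q ->
  forall x, P x -> Q x \/ Q x^*.
Proof.
move=> d0 pp hP hQ x hx.
have hxO : inO d x by case: hP => [[[hO _ _ _] _ _] _]; apply: hO.
have hN : P (x * x^*).
  case: hP => [[[_ _ _ hM] _ _] _]; rewrite mulrC; apply: hM => //; exact: inO_conj.
have := int_in_prime pp hP hQ (inO_norm d0 hxO) hN.
case: hQ => [[_ _ hpr] _] hQn.
by apply: hpr => //; apply: inO_conj.
Qed.

Lemma incl {d p : nat} {P Q : algC -> Prop} : (0 < d)%N -> prime p -> lies_above d p P -> lies_above d p Q ->
  (forall x, P x -> Q x) -> forall y, Q y -> P y.
Proof.
move=> d0 pp hP hQ PQ y hy.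
have hyO : inO d y by case: hQ => [[[hO _ _ _] _ _] _]; apply: hO.
have [] := cover d0 pp hQ hP y hy => // hys.
have hT : Q (y + y^*) by case: hQ => [[[_ _ hD _] _ _] _]; apply: hD => //; apply: PQ.
have := int_in_prime pp hQ hP (inO_trace d0 hyO) hT => hT'.
have -> : y = (y + y^*) - y^* by ring.
by case: hP => [[hI _ _] _]; apply: (idealN hI).
Qed.

Lemma classify {d p : nat} {P Q : algC -> Prop} : (0 < d)%N -> prime p -> lies_above d p P -> lies_above d p Q ->
  same_set P Q \/ same_set Q (cset P).
Proof.
move=> d0 pp hP hQ.
have hP' := conj_prime d0 hP.
have cov : forall x, P x -> Q x \/ cset Q x.
  by move=> x hx; exact: (cover d0 pp hP hQ x hx).
have hQ' := conj_prime d0 hQ.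
have [H1 | H1] := Classical_Prop.classic (forall x, P x -> Q x).
  left => x; split; first exact: H1.
  exact: incl d0 pp hP hQ H1 x.
have [H2 | H2] := Classical_Prop.classic (forall x, P x -> cset Q x).
  right => x; rewrite /cset; split => hx.
    have := incl d0 pp hP hQ' H2 x^*; rewrite /cset cK; apply.
    by [].
  by have := H2 x^* hx; rewrite /cset cK.
exfalso.
have [x [hx nx]] : exists x, P x /\ ~ Q x.
  apply: Classical_Prop.NNPP => N; apply: H1 => x hx.
  by apply: Classical_Prop.NNPP => nq; apply: N; exists x.
have [y [hy ny]] : exists y, P y /\ ~ cset Q y.
  apply: Classical_Prop.NNPP => N; apply: H2 => y hy.
  by apply: Classical_Prop.NNPP => nq; apply: N; exists y.
have qx : cset Q x by case: (cov x hx).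
have qy : Q y by case: (cov y hy).
have hxy : P (x + y) by case: hP => [[[_ _ hD _] _ _] _]; apply: hD.
case: (cov _ hxy) => h.
  apply: nx; have -> : x = (x + y) - y by ring.
  by case: hQ => [[hI _ _] _]; apply: (idealN hI).
apply: ny; have -> : y = (x + y) - x by ring.
by case: hQ' => [[hI _ _] _]; apply: (idealN hI).
Qed.

Lemma c_hL p r x y : (hL p r x y)^* = hL p r x^* y^*.
Proof. by rewrite /hL !cM cV !cNat. Qed.

Lemma transfer_rep {d p r m : nat} {P Q : algC -> Prop} : (0 < d)%N ->
  same_set Q (cset P) -> represented_by_I d p r m P -> represented_by_I d p r m Q.
Proof.
move=> d0 hQ [f [hO hlin hinj hh]].
exists (fun x i => (f x^* i)^*); split.
- by move=> x /hQ hx i; apply: inO_conj => //; apply: hO.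
- move=> a x y ha /hQ hx /hQ hy.
  rewrite cD cM hlin //; last exact: inO_conj.
  by apply: functional_extensionality => i; rewrite cD cM cK.
- move=> x y /hQ hx /hQ hy E.
  rewrite -[x]cK -[y]cK; congr (_^*); apply: hinj => //.
  apply: functional_extensionality => i.
  by rewrite -[f x^* i]cK -[f y^* i]cK (congr1 (fun g => g i) E).
- move=> x y /hQ hx /hQ hy.
  rewrite -[hL p r x y]cK c_hL -hh // /hI rmorph_sum /=.
  by apply: eq_bigr => i _; rewrite cM cK.
Qed.

Lemma transfer_S1 {d p r : nat} {P Q : algC -> Prop} : (0 < d)%N ->
  same_set Q (cset P) -> in_S1 d p r P -> in_S1 d p r Q.
Proof.
move=> d0 hQ [[h1 h2] [m [m0 hr]]]; split; last first.
  by exists m; split => //; apply: transfer_rep hr.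
split.
- move=> x /hQ hx nx.
  have -> : hL p r x x = hL p r x^* x^* by rewrite /hL cK (mulrC x).
  by apply: h1 => //; rewrite conjC_eq0.
- move=> x y /hQ hx /hQ hy.
  rewrite -[hL p r x y]cK c_hL; apply: inO_conj => //; exact: h2.
Qed.

Theorem lemma2 (d p : nat) (P1 P2 : algC -> Prop) :
  (0 < d)%N -> squarefree d -> prime p -> splits d p ->
  lies_above d p P1 -> lies_above d p P2 -> ~ same_set P1 P2 ->
  (forall r m : nat, (0 < r)%N -> (0 < m)%N ->
     represented_by_I d p r m P1 <-> represented_by_I d p r m P2) /\
  (forall r : nat, (0 < r)%N -> in_S1 d p r P1 <-> in_S1 d p r P2).
Proof.
move=> d0 _ pp _ h1 h2 n12.
have [// | E] := classify d0 pp h1 h2.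
have E' : same_set P1 (cset P2).
  by move=> x; rewrite /cset E /cset cK.
split=> r *; split; apply: transfer_rep || apply: transfer_S1; eassumption.
Qed.
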